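(* Let $Q=\langle b\rangle\ltimes_{(g,\gamma)}X$. For all $i,j,k\in\mathbb Z$ and $x,y,z\in X$, $$[(b^i,x),(b^j,y),(b^k,z)]=\Big(1,\ \Sigma_{I(i+j,i+j+k)}(x,y)+\Sigma_{I(i+k,i+j+k)}(x,z)+\Sigma_{I(j+k,i+j+k)}(y,z)\Big).$$
   Context: Let $(X,+)$ be an abelian group and $(g,\gamma)$ a construction pair on it: $g$ a permutation of $X$, $\gamma:X\times X\to X$ symmetric, alternating, biadditive, with (C1) $g^{-1}(g(x)+g(y))=x+y+\gamma(x,y)+g^{-1}(\gamma(x,y))+g^{-2}(\gamma(x,y))$, (C2) $\gamma(\gamma(x,y),z)=0$, (C3) $g^{-1}(\gamma(x,y))=\gamma(g(x),y)$ for all $x,y,z$. Let $\mathrm{Rad}(\gamma)=\{x:\gamma(x,y)=0\ \forall y\}$ and $r(g,\gamma)$ the least positive $r$ with $\sum_{0\le k<r}g^k(x)\in\mathrm{Rad}(\gamma)$ for all $x$ ($\infty$ if none). $I(i,j)$ is $\emptyset$ if $i=j$, $\{i,\dots,j-1\}$ if $i<j$, $\{j,\dots,i-1\}$ if $j<i$. For $U\subseteq\mathbb Z$, $\Sigma_U(x,y)=\sum_{k\in U}g^{-k}(\gamma(x,y))$. For a cyclic group $C=\langle b\rangle$ such that (if finite) $|g|$ and $r(g,\gamma)$ divide $|C|$, $C\ltimes_{(g,\gamma)}X$ is the Moufang loop on $C\times X$ with multiplication $(b^i,x)(b^j,y)=(b^{i+j},g^{-j}(x)+y+\Sigma_{I(i+j,-j)}(x,y))$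 and neutral element $(1,0)$. The associator $[u,v,w]$ in a loop is defined by $(u\cdot vw)[u,v,w]=uv\cdot w$. *)

(* Defs.v *)
From HB Require Import structures.
From mathcomp Require Import all_boot all_order all_algebra.
Set Implicit Arguments. Unset Strict Implicit. Unset Printing Implicit Defensive.
Import Order.TTheory GRing.Theory Num.Theory.
Local Open Scope ring_scope.

Section Defs.
Variable X : zmodType.
(* a permutation g of X, given together with its inverse gi *)
Variables (g gi : X -> X).

Definition gpow (k : int) : X -> X :=
  match k with
  | Posz m => iter m g
  | Negz m => iter m.+1 gi
  end.

Variable gamma : X -> X -> X.

Definition symmetric_form := forall x y, gamma x y = gamma y x.
Definition alternating_form := forall x, gamma x x = 0.
Definition biadditive_form :=
  (forall x y z, gamma (x + y) z = gamma x z + gamma y z) /\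
  (forall x y z, gamma x (y + z) = gamma x y + gamma x z).

Definition C1 := forall x y,
  gi (g x + g y) = x + y + gamma x y + gpow (-1) (gamma x y) + gpow (-2) (gamma x y).
Definition C2 := forall x y z, gamma (gamma x y) z = 0.
Definition C3 := forall x y, gi (gamma x y) = gamma (g x) y.

Definition construction_pair :=
  cancel g gi /\ cancel gi g /\ symmetric_form /\ alternating_form /\
  biadditive_form /\ C1 /\ C2 /\ C3.

Definition in_Rad (x : X) := forall y, gamma x y = 0.

Definition is_order_g (m : nat) :=
  (0 < m)%N /\ (forall x, iter m g x = x) /\
  (forall m', (0 < m')%N -> (m' < m)%N -> ~ (forall x, iter m' g x = x)).

Definition r_prop (m : nat) := forall x, in_Rad (\sum_(0 <= k < m) iter k g x).
Definition is_r (m : nat) :=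
  (0 < m)%N /\ r_prop m /\
  (forall m', (0 < m')%N -> (m' < m)%N -> ~ r_prop m').

Definition Iset (i j : int) : seq int :=
  if i < j then [seq i + (k%:Z) | k <- iota 0 `|j - i|%N]
  else [seq j + (k%:Z) | k <- iota 0 `|i - j|%N].

Definition SigmaI (i j : int) (x y : X) : X :=
  \sum_(k <- Iset i j) gpow (- k) (gamma x y).

(* Elements of C \ltimes X are represented by pairs (i, x) standing for (b^i, x);
   C = <b> of order n (n = 0 means infinite), so (i,x) and (j,y) denote the same
   element iff i = j mod n and x = y. *)
Definition same_elt (n : nat) (u v : int * X) : Prop :=
  ((u.1 == v.1 %[mod n%:Z])%Z) /\ u.2 = v.2.

Definition lmul (u v : int * X) : int * X :=
  let: (i, x) := u in let: (j, y) := v in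
  (i + j, gpow (- j) x + y + SigmaI (i + j) (- j) x y).

Definition is_associator (n : nat) (u v w a : int * X) : Prop :=
  same_elt n (lmul (lmul u (lmul v w)) a) (lmul (lmul u v) w).

End Defs.

(* Main.v *)
Require Import Defs.
From HB Require Import structures.
From mathcomp Require Import all_boot all_order all_algebra.
From mathcomp Require Import ring zify.
Import Order.TTheory GRing.Theory Num.Theory.
Local Open Scope ring_scope.

Lemma int_twoside (P : int -> Prop) (a : int) :
  (forall b, P b <-> P (b + 1)) -> P a -> forall b, P b.
Proof.
move=> H Pa.
have H1 : forall c : int, P (a + c).
  elim/int_ind => [|n IH|n IH]; first by rewrite addr0.
  - have -> : a + (n.+1)%:Z = (a + n%:Z) + 1 by lia.
    exact: (proj1 (H _)).
  - apply: (proj2 (H _)). have -> : a + - (n.+1)%:Z + 1 = a + - n%:Z by lia. exact IH.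
move=> b; have -> : b = a + (b - a) by ring.
exact: H1.
Qed.

Lemma ac9 (V : zmodType) (gx gy z S3 P1 P2 A1 A2 A3 : V) :
  gx + (gy + z + S3) + (P1 + P2) + (A1 + A2 + A3) =
  gx + gy + (P1 + A1) + z + (P2 + A2 + (S3 + A3)).
Proof.
rewrite -!addrA; congr (gx + (gy + _)).
rewrite (addrCA A1 z) (addrCA P1 z); congr (z + _).
rewrite (addrCA A2 S3) (addrCA P2 S3) (addrCA A1 S3) (addrCA P1 S3); congr (S3 + _).
by rewrite (addrCA A1 P2).
Qed.

Section S.
Variable X : zmodType.
Variables (g gi : X -> X) (gamma : X -> X -> X).
Hypotheses (gK : cancel g gi) (giK : cancel gi g).
Local Notation gp := (gpow g gi).

Lemma gpowS a x : gp (a + 1) x = g (gp a x).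
Proof.
case: a => [m|[|m]].
- by rewrite -PoszD addn1.
- by rewrite /= giK.
- have -> : Negz m.+1 + 1 = Negz m by lia.
  by rewrite /= giK.
Qed.

Lemma gpowP a x : gp (a - 1) x = gi (gp a x).
Proof. by rewrite -[in RHS](subrK 1 a) gpowS gK. Qed.

Lemma gpowD a b x : gp (a + b) x = gp a (gp b x).
Proof.
move: x; pattern a; apply: (@int_twoside _ 0) => [c|]; last by rewrite add0r.
split=> IH x.
- by rewrite addrAC gpowS IH gpowS.
- apply: (can_inj gK); rewrite -gpowS -[c + b + 1]addrAC IH gpowS //.
Qed.

Lemma gpow0 x : gp 0 x = x. Proof. by []. Qed.

Lemma gpowNK m x : gp (- m) (gp m x) = x.
Proof. by rewrite -gpowD addNr. Qed.
Lemma gpowKN m x : gp m (gp (- m) x) = x.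
Proof. by rewrite -gpowD subrr. Qed.
Hypotheses (hsym : forall x y, gamma x y = gamma y x)
  (halt : forall x, gamma x x = 0)
  (hDl : forall x y z, gamma (x + y) z = gamma x z + gamma y z)
  (hDr : forall x y z, gamma x (y + z) = gamma x y + gamma x z)
  (hC1 : forall x y, gi (g x + g y) = x + y + gamma x y + gp (-1) (gamma x y) + gp (-2) (gamma x y))
  (hC2 : forall x y z, gamma (gamma x y) z = 0)
  (hC3 : forall x y, gi (gamma x y) = gamma (g x) y).

Lemma gam0l y : gamma 0 y = 0.
Proof. by apply: (addrI (gamma 0 y)); rewrite -hDl !addr0. Qed.
Lemma gam0r y : gamma y 0 = 0.
Proof. by rewrite hsym gam0l. Qed.
Lemma gam2 x y : gamma x y + gamma x y = 0.
Proof.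
have := halt (x + y); rewrite hDl !hDr !halt add0r addr0 (hsym y x) //.
Qed.
Lemma gi0 : gi 0 = 0.
Proof. by rewrite -(halt 0) hC3 gam0r. Qed.
Lemma g0 : g 0 = 0.
Proof. by rewrite -{1}gi0 giK. Qed.
Lemma gamma_gi w y : gamma (gi w) y = g (gamma w y).
Proof. by rewrite -[in RHS](giK w) -hC3 giK. Qed.

Lemma gamma_gpow a x y : gamma (gp a x) y = gp (- a) (gamma x y).
Proof.
move: x; pattern a; apply: (@int_twoside _ 0) => [c|]; last by move=> x; rewrite oppr0.
split=> IH x.
- by rewrite gpowS // -hC3 IH -gpowP // opprD.
- have -> : gp c x = gi (gp (c + 1) x) by rewrite gpowS // gK.
  by rewrite gamma_gi IH -gpowS // opprD addrNK.
Qed.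
Lemma gamma_gpowr a x y : gamma y (gp a x) = gp (- a) (gamma y x).
Proof. by rewrite hsym gamma_gpow hsym. Qed.

Lemma gpz m : gp m 0 = 0.
Proof. by rewrite -(halt 0) -{1}(opprK m) -gamma_gpow gam0r. Qed.

Definition rad a := forall y, gamma a y = 0.
Lemma radD a b : rad a -> rad b -> rad (a + b).
Proof. by move=> ha hb y; rewrite hDl ha hb addr0. Qed.
Lemma rad_gpow m a : rad a -> rad (gp m a).
Proof. by move=> ha y; rewrite gamma_gpow ha gpz. Qed.

Lemma orth_gpow m a b : gamma a b = 0 -> gamma (gp m a) (gp m b) = 0.
Proof. by move=> H; rewrite gamma_gpow hsym gamma_gpow hsym H !gpz. Qed.

Lemma addg p q : gamma p q = 0 -> g (p + q) = g p + g q.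
Proof. by move=> H; rewrite -[RHS]giK hC1 H !gpz !addr0. Qed.

Lemma gpow_add m a b : gamma a b = 0 -> gp m (a + b) = gp m a + gp m b.
Proof.
move: a b; pattern m; apply: (@int_twoside _ 0) => [c|]; last by [].
split=> IH a b H.
- by rewrite !gpowS // IH // addg // orth_gpow.
- apply: (can_inj gK); by rewrite -gpowS // IH // addg ?orth_gpow // -!gpowS.
Qed.

Definition good c := forall m, rad (gp m c) /\ gp m c + gp m c = 0.
Lemma good_gamma u v : good (gamma u v).
Proof.
move=> m; have -> : gp m (gamma u v) = gamma (gp (-m) u) v by rewrite gamma_gpow opprK.
split; [exact: hC2 | exact: gam2].
Qed.
Lemma good_add c d : good c -> good d -> good (c + d).
Proof.
move=> hc hd m; have [rc _] := hc 0; rewrite gpow_add //.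
have [r1 e1] := hc m; have [r2 e2] := hd m.
by split; [exact: radD | rewrite addrACA e1 e2 addr0].
Qed.
Lemma good0 : good 0.
Proof. by move=> m; rewrite gpz addr0; split=> // y; rewrite gam0l. Qed.
Lemma good_gpow n c : good c -> good (gp n c).
Proof. by move=> hc m; rewrite -gpowD //; apply: hc. Qed.
Lemma good_sum (s : seq int) (F : int -> X) :
  (forall k, good (F k)) -> good (\sum_(k <- s) F k).
Proof.
move=> hF; elim: s => [|a s IH]; first by rewrite big_nil; exact: good0.
by rewrite big_cons; apply: good_add.
Qed.
Lemma gpow_sum m (s : seq int) (F : int -> X) :
  (forall k, good (F k)) -> gp m (\sum_(k <- s) F k) = \sum_(k <- s) gp m (F k).
Proof.
move=> hF; elim: s => [|a s IH]; first by rewrite !big_nil gpz.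
have [r _] := hF a 0.
by rewrite !big_cons gpow_add ?IH //; apply: r.
Qed.

Definition T (f : int -> X) a b := \sum_(k <- Iset a b) f k.

Lemma Iset_sym a b : Iset a b = Iset b a.
Proof. by rewrite /Iset; case: ltgtP => // ->. Qed.

Lemma Iset_up a n : Iset a (a + n%:Z) = [seq a + k%:Z | k <- iota 0 n].
Proof.
rewrite /Iset; case: n => [|n].
  by rewrite addr0 ltxx subrr.
rewrite ifT; last by lia.
by have -> : a + (n.+1)%:Z - a = (n.+1)%:Z by ring.
Qed.

Lemma T_up f a n : T f a (a + n%:Z) = \sum_(k <- iota 0 n) f (a + k%:Z).
Proof. by rewrite /T Iset_up big_map. Qed.
Lemma T_sym f a b : T f a b = T f b a.
Proof. by rewrite /T Iset_sym. Qed.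
Lemma T_aa f a : T f a a = 0.
Proof. by have := T_up f a 0; rewrite addr0 => ->; rewrite big_nil. Qed.

Section Char2.
Variable f : int -> X.
Hypothesis h2 : forall k, f k + f k = 0.

Lemma T_step a b : T f a (b + 1) = T f a b + f b.
Proof.
case: (lerP a b) => hab.
- have hb : b = a + (`|(b - a)%R|%N)%:Z by lia.
  move: hb; set n := `|(b - a)%R|%N => ->.
  rewrite -addrA -PoszD addn1 !T_up -addn1 iotaD big_cat big_seq1 /= add0n //.
- have ha : a = (b + 1) + (`|(a - (b + 1))%R|%N)%:Z by lia.
  move: ha; set n := `|(a - (b + 1))%R|%N => ->.
  rewrite (T_sym _ _ (b + 1)%R) T_up.
  have -> : b + 1 + n%:Z = b + (n.+1)%:Z by lia.
  rewrite (T_sym _ _ b) T_up /= big_cons addr0.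
  have -> : iota 1 n = map (addn 1) (iota 0 n) by rewrite -iotaDl.
  rewrite big_map.
  under [in RHS]eq_bigr => k _ do rewrite PoszD addrA.
  by rewrite [f b + _]addrC -addrA h2 addr0.
Qed.

Lemma T_char a b : T f a b + T f a b = 0.
Proof. by rewrite /T -big_split big1 // => k _; apply: h2. Qed.

Lemma T_D a b : T f a b = T f 0 a + T f 0 b.
Proof.
pattern b; apply: (@int_twoside _ a) => [c|]; last by rewrite T_aa T_char.
rewrite !T_step addrA; split=> [->//|]; exact: addIr.
Qed.

Lemma T_cocycle a b c : T f a b = T f a c + T f c b.
Proof.
rewrite (T_D a b) (T_D a c) (T_D c b) -addrA (addrA (T f 0 c)) T_char add0r //.
Qed.
End Char2.

Lemma T_shift f a b s : T f (a + s) (b + s) = T (fun k => f (k + s)) a b.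
Proof.
rewrite /T /Iset ltrD2r.
have -> : b + s - (a + s) = b - a by ring.
have -> : a + s - (b + s) = a - b by ring.
by case: ifP => _; rewrite !big_map; apply: eq_bigr => k _; rewrite addrAC.
Qed.

Definition Sg c a b := T (fun k => gp (- k) c) a b.

Lemma good2 c : good c -> forall k, gp (- k) c + gp (- k) c = 0.
Proof. by move=> hc k; case: (hc (- k)). Qed.

Lemma Sg_add c d a b : good c -> good d -> Sg (c + d) a b = Sg c a b + Sg d a b.
Proof.
move=> hc hd; rewrite /Sg /T -big_split; apply: eq_bigr => k _.
by rewrite gpow_add //; case: (hc 0).
Qed.

Lemma Sg_in m c a b : Sg (gp m c) a b = Sg c (a - m) (b - m).
Proof.
rewrite /Sg T_shift /T; apply: eq_bigr => k _.
by rewrite -gpowD // opprD opprK.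
Qed.

Lemma good_Sg c a b : good c -> good (Sg c a b).
Proof. by move=> hc; apply: good_sum => k; apply: good_gpow. Qed.

Lemma Sg_out m c a b : good c -> gp m (Sg c a b) = Sg c (a - m) (b - m).
Proof.
move=> hc; rewrite -Sg_in /Sg /T gpow_sum; last by move=> k; apply: good_gpow.
by apply: eq_bigr => k _; rewrite -!gpowD // addrC.
Qed.

Lemma Sg_cocycle c a b e : good c -> Sg c a b = Sg c a e + Sg c e b.
Proof. by move=> hc; apply: T_cocycle; apply: good2. Qed.
Lemma Sg_sym c a b : Sg c a b = Sg c b a.
Proof. exact: T_sym. Qed.
Lemma Sg0 c a : Sg c a a = 0.
Proof. exact: T_aa. Qed.

Lemma good_rad c y : good c -> gamma c y = 0.
Proof. by move=> hc; case: (hc 0) => r _; apply: r. Qed.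

Lemma addg_full p q : g (p + q) = g p + g q + Sg (gamma p q) (-1) 2.
Proof.
set d := gamma p q.
have gd : good d by apply: good_gamma.
have gd1 : good (gp (-1) d) by apply: good_gpow.
have gd2 : good (gp (-2) d) by apply: good_gpow.
have gD : good (d + gp (-1) d + gp (-2) d) by apply: good_add => //; apply: good_add.
have E : g p + g q = g (p + q) + g (d + gp (-1) d + gp (-2) d).
  rewrite -[LHS]giK hC1 -/d.
  have -> : p + q + d + gp (-1) d + gp (-2) d = (p + q) + (d + gp (-1) d + gp (-2) d) by rewrite !addrA.
  rewrite (addg (p + q)) //.
  by rewrite hsym; case: (gD 0) => r _; apply: r.
have HS : Sg d (-1) 2 = g (d + gp (-1) d + gp (-2) d).
  rewrite [X in Sg _ _ X](_ : 2 = -1 + (3%N)%:Z) //.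
  rewrite /Sg T_up /= !big_cons big_nil addr0.
  rewrite -[g _]/(gp 1 _) !gpow_add.
  all: try (by apply: (good_rad _ _ gd)); have gdd : good (d + gi d) by exact: good_add gd gd1.
  all: try (by apply: (good_rad _ _ gdd)).
  rewrite addr0 addrA; congr (_ + _ + _) => /=; by rewrite giK.
rewrite HS E -addrA.
by move: (gD 1) => [_ /= ->]; rewrite addr0.
Qed.

Lemma gpow_full m a b :
  gp m (a + b) = gp m a + gp m b + Sg (gamma a b) (- m) (m + m).
Proof.
move: a b; pattern m; apply: (@int_twoside _ 0) => [c|]; last first.
  by move=> a b; rewrite oppr0 addr0 Sg0 addr0.
suff K : forall a b, g (gp c a + gp c b + Sg (gamma a b) (- c) (c + c)) =
    gp (c + 1) a + gp (c + 1) b + Sg (gamma a b) (- (c + 1)) (c + 1 + (c + 1)).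
  split=> IH a b.
  - by rewrite gpowS // IH K.
  - by apply: (can_inj gK); rewrite -gpowS // IH K.
move=> a b.
have gc : good (gamma a b) by apply: good_gamma.
rewrite addg; last first.
  by rewrite hsym; apply: good_rad; apply: good_Sg.
rewrite addg_full gamma_gpow gamma_gpowr -gpowD // Sg_in.
rewrite -[g (Sg _ _ _)]/(gp 1 _) Sg_out // !gpowS // -addrA.
congr (_ + _).
rewrite (Sg_cocycle _ (- (c + 1)) (c + 1 + (c + 1)) (c + c - 1)) //.
rewrite addrC; congr (_ + _); congr Sg; ring.
Qed.

Lemma SigmaIE a b x y : SigmaI g gi gamma a b x y = Sg (gamma x y) a b.
Proof. by []. Qed.

Lemma Sg_zero a b : Sg 0 a b = 0.
Proof. by rewrite /Sg /T big1 // => t _; rewrite gpz. Qed.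

Lemma assoc_sec (n : nat) (i j k : int) (x y z : X) :
  is_associator g gi gamma n (i, x) (j, y) (k, z)
    (0, SigmaI g gi gamma (i + j) (i + j + k) x y
      + SigmaI g gi gamma (i + k) (i + j + k) x z
      + SigmaI g gi gamma (j + k) (i + j + k) y z).
Proof.
rewrite /is_associator /same_elt /lmul /=; split.
  by rewrite addr0 addrA eqxx.
rewrite !SigmaIE.
set c1 := gamma x y; set c2 := gamma x z; set c3 := gamma y z.
have g1 : good c1 by apply: good_gamma.
have g2 : good c2 by apply: good_gamma.
have g3 : good c3 by apply: good_gamma.
set A := Sg c1 (i + j) (i + j + k) + _ + _.
have gA : good A by apply: good_add; [apply: good_add|]; apply: good_Sg.
rewrite (hsym _ A) (good_rad _ _ gA) Sg_zero addr0.
set S3 := Sg c3 (j + k) (- k).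
have gS3 : good S3 by apply: good_Sg.
set S1 := Sg c1 (i + j) (- j).
have gS1 : good S1 by apply: good_Sg.
have eW : gamma x (gp (- k) y + z + S3) = gp k c1 + c2.
  by rewrite !hDr (hsym x S3) (good_rad _ _ gS3) addr0 gamma_gpowr opprK.
have eV : gamma (gp (- j) x + y + S1) z = gp j c2 + c3.
  by rewrite !hDl (good_rad _ _ gS1) addr0 gamma_gpow opprK.
have gk1 : good (gp k c1) by apply: good_gpow.
have gj2 : good (gp j c2) by apply: good_gpow.
rewrite eW eV !Sg_add // !Sg_in.
rewrite gpow_add; last by rewrite hsym (good_rad _ _ gS1).
rewrite gpow_full Sg_out // gamma_gpow opprK Sg_in.
rewrite -/c1.
have ex : gp (- k) (gp (- j) x) = gp (- (j + k)) x by rewrite -gpowD // opprD addrC.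
rewrite ex.
have R12 : Sg c1 (- - k - j) (- k - k - j) + Sg c1 (i + j - - k) (- j - - k) =
    Sg c1 (i + (j + k) - k) (- (j + k) - k) + Sg c1 (i + j) (i + j + k).
  transitivity (Sg c1 (i + j + k) (- (k + k) - j)).
    rewrite (Sg_cocycle _ (i + j + k) _ (k - j) g1) addrC; congr (_ + _); congr Sg; ring.
  rewrite (Sg_cocycle _ (i + j + k) _ (i + j) g1) (Sg_sym c1 (i + j + k) (i + j)) addrC.
  congr (_ + _); congr Sg; ring.
rewrite -(addrA _ (Sg c1 (- - k - j) _)) R12.
have R3 : Sg c2 (i + j + k - j) (- k - j) =
    Sg c2 (i + (j + k)) (- (j + k)) + Sg c2 (i + k) (i + j + k).
  transitivity (Sg c2 (i + k) (- (j + k))); first by congr Sg; ring.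
  rewrite (Sg_cocycle _ (i + k) _ (i + j + k) g2) addrC; congr (_ + _); congr Sg; ring.
have R4 : Sg c3 (i + j + k) (- k) = S3 + Sg c3 (j + k) (i + j + k).
  by rewrite (Sg_cocycle _ (i + j + k) _ (j + k) g3) (Sg_sym c3 (i + j + k) (j + k)) addrC.
rewrite R3 R4 /A.
exact: ac9.
Qed.
End S.

Theorem mainTheorem5 (X : zmodType) (g gi : X -> X) (gamma : X -> X -> X)
  (n : nat)
  (Hpair : construction_pair g gi gamma)
  (Hn : (0 < n)%N ->
        (exists m, is_order_g g m /\ (m %| n)%N) /\
        (exists m, is_r g gamma m /\ (m %| n)%N))
  (i j k : int) (x y z : X) :
  is_associator g gi gamma n (i, x) (j, y) (k, z)
    (0, SigmaI g gi gamma (i + j) (i + j + k) x y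
      + SigmaI g gi gamma (i + k) (i + j + k) x z
      + SigmaI g gi gamma (j + k) (i + j + k) y z).
Proof.
case: Hpair => [gK [giK [hsym [halt [[hDl hDr] [hC1 [hC2 hC3]]]]]]].
by apply: assoc_sec.
Qed.
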